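(* Let $\mathbf P=(P,\leq,{}',0,1)$ be a finite pseudo-orthomodular poset, and put $M(x,y)=L(U(x,y'),y)$ and $R(x,y)=L(U(L(x,y),x'))$. Then the Dedekind-MacNeille completion $\mathrm{DM}(\mathbf P)$ is a complete orthomodular lattice. Moreover, $\mathrm{DM}(\mathbf P)$ is a left residuated lattice with respect to the operations $x\odot y=(x\vee y')\wedge y$ and $x\to y=(x\wedge y)\vee x'$ obtained from $M$ and $R$ by the DM-transformation.
   Context: For $M\subseteq P$, $U(M)$, $L(M)$ are the sets of upper and lower bounds; $U(a,b)=U(\{a,b\})$, $L(a,b)=L(\{a,b\})$. A poset with complementation is a bounded poset with antitone involution $'$ ($x\le y\Rightarrow y'\le x'$, $x''=x$) with $L(x,x')=\{0\}$, $U(x,x')=\{1\}$; it is pseudo-orthomodular if $L(U(L(x,y),y'),y)=L(x,y)$ for all $x,y$. The Dedekind-MacNeille completion $\mathrm{DM}(\mathbf P)$ is the complete lattice of subsets $B\subseteq P$ with $L(U(B))=B$ under inclusion, $P$ embedded via $x\mapsto L(\{x\})$, with antitone involution $X'=L(\{u'\mid u\in X\})$. The DM-transformation replaces $U(x,y)$ or $LU(x,y)$ by $x\vee y$ and $L(x,y)$ by $x\wedge y$. A lattice with complementation is orthomodular if $x\vee y=((x\vee y)\wedge y')\vee y$. A lattice with top $1$ is left residuated with respect to binary operations $\odot,\to$ if $x\odot 1=x=1\odot x$ and $x\odot y\le z\iff x\le y\to z$ for all $x,y,z$. *)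

(* Defs.v *)
From mathcomp Require Import all_boot.
Set Implicit Arguments. Unset Strict Implicit. Unset Printing Implicit Defensive.

Section DM.
Variables (T : finType) (le : rel T).

Definition ub (M : {set T}) : {set T} := [set u | [forall a in M, le a u]].
Definition lb (M : {set T}) : {set T} := [set l | [forall a in M, le l a]].

Definition is_partial_order : Prop :=
  [/\ forall x, le x x,
      forall x y, le x y -> le y x -> x = y &
      forall x y z, le x y -> le y z -> le x z].

Definition poset_with_complementation (c : T -> T) (z o : T) : Prop :=
  [/\ is_partial_order,
      forall x, le z x /\ le x o,
      forall x y, le x y -> le (c y) (c x),
      forall x, c (c x) = x &
      forall x, lb [set x; c x] = [set z] /\ ub [set x; c x] = [set o]].

Definition pseudo_orthomodular (c : T -> T) : Prop :=
  forall x y, lb (ub (lb [set x; y] :|: [set c y]) :|: [set y]) = lb [set x; y].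

(* Dedekind-MacNeille completion: the sets B with L(U(B)) = B, ordered by inclusion *)
Definition is_DM (B : {set T}) : Prop := lb (ub B) = B.

Definition DM_meet (X Y : {set T}) : {set T} := X :&: Y.
Definition DM_join (X Y : {set T}) : {set T} := lb (ub (X :|: Y)).
Definition DM_compl (c : T -> T) (X : {set T}) : {set T} := lb (c @: X).
Definition DM_top : {set T} := [set: T].
Definition DM_bot : {set T} := lb (ub set0).

Definition DM_odot (c : T -> T) (X Y : {set T}) : {set T} :=
  DM_meet (DM_join X (DM_compl c Y)) Y.
Definition DM_impl (c : T -> T) (X Y : {set T}) : {set T} :=
  DM_join (DM_meet X Y) (DM_compl c X).

Definition DM_is_lub (S : {set {set T}}) (J : {set T}) : Prop :=
  is_DM J /\ (forall X, X \in S -> X \subset J) /\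
  (forall Y, is_DM Y -> (forall X, X \in S -> X \subset Y) -> J \subset Y).
Definition DM_is_glb (S : {set {set T}}) (m : {set T}) : Prop :=
  is_DM m /\ (forall X, X \in S -> m \subset X) /\
  (forall Y, is_DM Y -> (forall X, X \in S -> Y \subset X) -> Y \subset m).

End DM.

(* Main.v *)
Require Import Defs.
From mathcomp Require Import all_boot.
Set Implicit Arguments. Unset Strict Implicit. Unset Printing Implicit Defensive.

Section Gen.
Variables (T : finType) (le : rel T).
Local Notation L := (lb le).
Local Notation U := (ub le).

Lemma lbP (M : {set T}) x : reflect (forall a, a \in M -> le x a) (x \in L M).
Proof. rewrite inE; exact: (iffP forall_inP). Qed.
Lemma ubP (M : {set T}) x : reflect (forall a, a \in M -> le a x) (x \in U M).
Proof. rewrite inE; exact: (iffP forall_inP). Qed.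

Lemma lb_anti (A B : {set T}) : A \subset B -> L B \subset L A.
Proof. move=> /subsetP AB; apply/subsetP=> x /lbP H; apply/lbP=> a /AB; exact: H. Qed.
Lemma ub_anti (A B : {set T}) : A \subset B -> U B \subset U A.
Proof. move=> /subsetP AB; apply/subsetP=> x /ubP H; apply/ubP=> a /AB; exact: H. Qed.
Lemma sub_lbub (A : {set T}) : A \subset L (U A).
Proof. apply/subsetP=> x xA; apply/lbP=> u /ubP; exact. Qed.
Lemma sub_ublb (A : {set T}) : A \subset U (L A).
Proof. apply/subsetP=> x xA; apply/ubP=> u /lbP; exact. Qed.
Lemma ublbub (A : {set T}) : U (L (U A)) = U A.
Proof. apply/eqP; rewrite eqEsubset ub_anti ?sub_lbub //; exact: sub_ublb. Qed.
Lemma lbublb (A : {set T}) : L (U (L A)) = L A.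
Proof. apply/eqP; rewrite eqEsubset lb_anti ?sub_ublb //; exact: sub_lbub. Qed.
Lemma DM_lb (A : {set T}) : is_DM le (L A).
Proof. exact: lbublb. Qed.
Lemma lbU (A B : {set T}) : L (A :|: B) = L A :&: L B.
Proof.
apply/setP=> x; apply/idP/setIP.
  by move=> /lbP H; split; apply/lbP=> a aA; apply: H; rewrite inE aA ?orbT.
by case=> /lbP H1 /lbP H2; apply/lbP=> a /setUP [] ?; [apply: H1|apply: H2].
Qed.
Lemma ubU (A B : {set T}) : U (A :|: B) = U A :&: U B.
Proof.
apply/setP=> x; apply/idP/setIP.
  by move=> /ubP H; split; apply/ubP=> a aA; apply: H; rewrite inE aA ?orbT.
by case=> /ubP H1 /ubP H2; apply/ubP=> a /setUP [] ?; [apply: H1|apply: H2].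
Qed.
Lemma DM_sub (A X : {set T}) : is_DM le X -> A \subset X -> L (U A) \subset X.
Proof. by move=> DX AX; rewrite -DX; apply/lb_anti/ub_anti. Qed.
Lemma DM_I (X Y : {set T}) : is_DM le X -> is_DM le Y -> is_DM le (X :&: Y).
Proof.
move=> DX DY; apply/eqP; rewrite eqEsubset sub_lbub andbT subsetI.
by rewrite !DM_sub ?subsetIl ?subsetIr.
Qed.
Lemma join_ubl (A B : {set T}) : A \subset DM_join le A B.
Proof. exact: subset_trans (subsetUl A B) (sub_lbub _). Qed.
Lemma join_ubr (A B : {set T}) : B \subset DM_join le A B.
Proof. exact: subset_trans (subsetUr A B) (sub_lbub _). Qed.
Lemma join_least (A B W : {set T}) : is_DM le W -> A \subset W -> B \subset W -> DM_join le A B \subset W.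
Proof. by move=> DW AW BW; apply: DM_sub => //; rewrite subUset AW. Qed.
Lemma join_mono (A B A' B' : {set T}) : A \subset A' -> B \subset B' -> DM_join le A B \subset DM_join le A' B'.
Proof.
move=> H1 H2; apply: join_least; first exact: DM_lb.
  exact: subset_trans H1 (join_ubl _ _).
exact: subset_trans H2 (join_ubr _ _).
Qed.
Lemma joinC (A B : {set T}) : DM_join le A B = DM_join le B A.
Proof. by rewrite /DM_join setUC. Qed.
Lemma joinA (A B C : {set T}) : DM_join le A (DM_join le B C) = DM_join le (DM_join le A B) C.
Proof.
by rewrite /DM_join ubU ublbub [in RHS]ubU ublbub !ubU setIA.
Qed.
End Gen.

Section Main.
Variables (T : finType) (le : rel T) (c : T -> T) (z o : T).
Hypothesis Hpc : poset_with_complementation le c z o.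
Hypothesis Hpom : pseudo_orthomodular le c.
Local Notation L := (lb le).
Local Notation U := (ub le).
Local Notation compl := (DM_compl le c).
Local Notation DM := (is_DM le).

Lemma le_refl x : le x x. Proof. by case: Hpc => [[]]. Qed.
Lemma le_trans x y w : le x y -> le y w -> le x w.
Proof. by case: Hpc => [[_ _ H]] *; apply: (H x y w). Qed.
Lemma le_z x : le z x. Proof. by case: Hpc => _ H *; case: (H x). Qed.
Lemma le_o x : le x o. Proof. by case: Hpc => _ H *; case: (H x). Qed.
Lemma c_anti x y : le x y -> le (c y) (c x). Proof. by case: Hpc => _ _ H *; apply: H. Qed.
Lemma cK : involutive c. Proof. by case: Hpc. Qed.
Lemma c_inj : injective c. Proof. exact: can_inj cK. Qed.
Lemma lc x y : le (c x) y -> le (c y) x. Proof. by move/c_anti; rewrite cK. Qed.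
Lemma lb_pair x : L [set x; c x] = [set z]. Proof. by case: Hpc => _ _ _ _ H; case: (H x). Qed.
Lemma ub_pair x : U [set x; c x] = [set o]. Proof. by case: Hpc => _ _ _ _ H; case: (H x). Qed.

Lemma memc (A : {set T}) y : (y \in c @: A) = (c y \in A).
Proof. by rewrite -{1}(cK y) mem_imset //; exact: c_inj. Qed.
Lemma imc_lb (A : {set T}) : c @: L A = U (c @: A).
Proof.
apply/setP=> y; rewrite memc; apply/lbP/ubP => H a.
  by rewrite memc => /H /c_anti; rewrite !cK.
by move=> aA; apply: lc; apply: H; rewrite memc cK.
Qed.
Lemma imc_ub (A : {set T}) : c @: U A = L (c @: A).
Proof.
apply/setP=> y; rewrite memc; apply/ubP/lbP => H a.
  by rewrite memc => /H /c_anti; rewrite !cK.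
by move=> aA; move: (H (c a)); rewrite memc cK => /(_ aA) /c_anti; rewrite cK.
Qed.
Lemma imcK (A : {set T}) : c @: (c @: A) = A.
Proof. by apply/setP=> y; rewrite !memc cK. Qed.

Lemma complK X : DM X -> compl (compl X) = X.
Proof. by rewrite /DM_compl imc_lb imcK. Qed.
Lemma compl_join (A B : {set T}) : compl (DM_join le A B) = compl A :&: compl B.
Proof. by rewrite /DM_compl /DM_join imc_lb imc_ub lbublb imsetU lbU. Qed.
Lemma compl_meet X Y : DM X -> DM Y -> compl (X :&: Y) = DM_join le (compl X) (compl Y).
Proof.
move=> DX DY; rewrite -{1}(complK DX) -{1}(complK DY) -compl_join complK //.
exact: DM_lb.
Qed.
Lemma compl_anti (X Y : {set T}) : X \subset Y -> compl Y \subset compl X.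
Proof. by move=> XY; apply/lb_anti/imsetS. Qed.
Lemma memlb1 p y : (y \in L [set p]) = le y p.
Proof. by apply/lbP/idP => [H|H a /set1P ->] //; apply: H; rewrite set11. Qed.
Lemma lbub1 x : L (U [set x]) = L [set x].
Proof.
apply/eqP; rewrite eqEsubset lb_anti ?sub1set; last by apply/ubP=> a /set1P ->; apply: le_refl.
apply/subsetP=> y; rewrite memlb1 => yx; apply/lbP=> u /ubP H.
by apply: le_trans yx (H x (set11 x)).
Qed.
Lemma compl_pt p : compl (L [set p]) = L [set c p].
Proof. by rewrite /DM_compl imc_lb imset_set1 lbub1. Qed.
Lemma DM_down X p : DM X -> p \in X -> L [set p] \subset X.
Proof. move=> DX pX; rewrite -DX; apply/subsetP => y; rewrite memlb1 => yp.
by apply/lbP => u /ubP H; apply: le_trans yp (H p pX). Qed.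
Lemma z_in X : DM X -> z \in X.
Proof. by move=> DX; rewrite -DX; apply/lbP => *; apply: le_z. Qed.
Lemma bot_sub X : DM X -> DM_bot le \subset X.
Proof. by move=> DX; apply: DM_sub => //; apply: sub0set. Qed.
Lemma orth0 (X : {set T}) p : p \in X -> p \in compl X -> p = z.
Proof.
move=> pX /lbP pc; have : p \in L [set p; c p].
  by apply/lbP=> a /set2P [->|->]; [apply: le_refl| apply: pc; apply: imset_f].
by rewrite lb_pair => /set1P.
Qed.

Lemma pom_lemma y V : DM V -> V \subset L [set y] ->
  DM_join le V (L [set c y]) :&: L [set y] \subset V.
Proof.
move=> DV VY; apply/subsetP => t /setIP [tJ ty]; rewrite -DV; apply/lbP => u uU.
have : t \in L (U (L [set u; y] :|: [set c y]) :|: [set y]).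
  apply/lbP => a /setUP [aU | /set1P ->]; last by rewrite memlb1 in ty.
  move/lbP: tJ; apply; apply/ubP => b /setUP [bV | bc].
    move/ubP: aU; apply; apply/setUP; left; apply/lbP => w /set2P [->|->].
      by move/ubP: uU; apply.
    by have := subsetP VY b bV; rewrite memlb1.
  move/ubP: aU => aU; apply: le_trans (aU (c y) _); first by rewrite memlb1 in bc.
  by rewrite !inE eqxx orbT.
by rewrite Hpom => /lbP; apply; rewrite !inE eqxx.
Qed.

Definition good (Y : {set T}) := forall W, DM W -> Y \subset W ->
  W \subset DM_join le Y (W :&: compl Y).

Lemma goodA p : good (L [set p]).
Proof.
move=> W DW pW.
have VS : compl W \subset L [set c p] by rewrite -compl_pt; apply: compl_anti.
have H := pom_lemma (DM_lb _ _) VS; rewrite cK in H.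
have H2 := compl_anti H; rewrite complK // in H2.
rewrite compl_meet ?compl_join ?compl_pt ?cK ?complK // in H2; try exact: DM_lb.
by rewrite compl_pt joinC.
Qed.

Lemma step D p : DM D -> good D -> p \in compl D -> good (DM_join le D (L [set p])).
Proof.
move=> DD gD pD W DW sub.
have DW' : D \subset W := subset_trans (join_ubl _ _ _) sub.
have pW : p \in W.
  by apply: (subsetP sub); apply: (subsetP (join_ubr _ D (L [set p]))); rewrite memlb1 le_refl.
have H1 := gD W DW DW'.
have DI : DM (W :&: compl D) by apply: DM_I => //; apply: DM_lb.
have pI : p \in W :&: compl D by rewrite inE pW pD.
have H2 := goodA DI (DM_down DI pI).
rewrite compl_join compl_pt setIA -joinA; apply: subset_trans H1 _.
by apply: join_mono => //; rewrite compl_pt in H2.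
Qed.

Lemma good_bot : good (DM_bot le).
Proof.
move=> W DW _; apply: subset_trans (join_ubr _ _ _).
apply/subsetP => w wW; rewrite inE wW /=; apply/lbP => a; rewrite memc => /lbP cab.
have : le (c a) (c w) by apply: cab; apply/ubP => ? ; rewrite inE.
by move/c_anti; rewrite !cK.
Qed.

Lemma good_final Y D : DM Y -> DM D -> good D -> D \subset Y ->
  (forall p, p \in Y :&: compl D -> p = z) -> good Y.
Proof.
move=> DY DD gD DYs H.
suff -> : Y = D by [].
apply/eqP; rewrite eqEsubset DYs andbT.
apply: subset_trans (gD Y DY DYs) _; apply: join_least => //.
by apply/subsetP => p /H ->; apply: z_in.
Qed.

Lemma all_good Y : DM Y -> good Y.
Proof.
move=> DY.
suff: forall n D, #|Y :\: D| <= n -> DM D -> good D -> D \subset Y -> good Y.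
  move/(_ #|Y| (DM_bot le)); apply; first exact/subset_leq_card/subsetDl.
  - exact: DM_lb.
  - exact: good_bot.
  - exact: bot_sub.
elim=> [|n IH] D hn DD gD DYs;
  (case: (boolP [exists p, (p \in Y :&: compl D) && (p != z)]);
   last by move=> Hn; apply: (good_final DY DD gD DYs) => p pI;
     apply/eqP; move: Hn; apply: contraNT => pz; apply/existsP; exists p; rewrite pI).
all: move/existsP => [p /andP [/setIP [pY pD] pz]].
all: have pnD : p \notin D by apply/negP => pDD; move: pz; rewrite (orth0 pDD pD) eqxx.
all: set D2 := DM_join le D (L [set p]).
all: have lt : #|Y :\: D2| < #|Y :\: D|.
all: try (apply: proper_card; apply/properP; split; first by apply: setDS; apply: join_ubl).
all: try (exists p; first by rewrite inE pY pnD).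
all: try (by rewrite inE pY andbT negbK; apply: (subsetP (join_ubr _ D _)); rewrite memlb1 le_refl).
  by move: (leq_trans lt hn).
apply: (IH D2); first by rewrite -ltnS; apply: leq_trans lt hn.
- exact: DM_lb.
- exact: step.
- by apply: join_least => //; apply: DM_down.
Qed.

Lemma oml X Y : DM X -> DM Y ->
  DM_join le X Y = DM_join le (DM_join le X Y :&: compl Y) Y.
Proof.
move=> DX DY; apply/eqP; rewrite eqEsubset; apply/andP; split.
  rewrite (joinC _ (_ :&: _)); apply: (all_good DY) (DM_lb _ _) (join_ubr _ _ _).
apply: join_least; first exact: DM_lb.
  exact: subset_trans (subsetIl _ _) (subxx _).
exact: join_ubr.
Qed.

Lemma dual_oml V Y : DM V -> DM Y -> V \subset Y ->
  DM_join le V (compl Y) :&: Y \subset V.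
Proof.
move=> DV DY VY.
have H := all_good (DM_lb le (c @: Y)) (DM_lb le (c @: V)) (compl_anti VY).
have H2 := compl_anti H; rewrite complK // in H2.
rewrite compl_join complK // compl_meet ?complK // in H2; last exact: DM_lb.
by rewrite setIC.
Qed.

Lemma resid X Y Z : DM X -> DM Y -> DM Z ->
  (DM_odot le c X Y \subset Z <-> X \subset DM_impl le c Y Z).
Proof.
move=> DX DY DZ; rewrite /DM_odot /DM_impl /DM_meet; split => H.
  apply: subset_trans (join_ubl _ X (compl Y)) _.
  have DcY : DM (compl Y) by apply: DM_lb.
  have := all_good DcY (DM_lb _ _) (join_ubr _ X (compl Y)).
  rewrite complK // => H1; apply: subset_trans H1 _; rewrite joinC.
  apply: join_mono => //; rewrite subsetI subsetIr; exact: H.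
have DYZ : DM (Y :&: Z) by apply: DM_I.
have H1 : DM_join le X (compl Y) \subset DM_join le (Y :&: Z) (compl Y).
  by apply: join_least => //; [apply: DM_lb | apply: join_ubr].
apply: subset_trans (setSI Y H1) _.
apply: subset_trans (dual_oml DYZ DY (subsetIl _ _)) _.
exact: subsetIr.
Qed.

Lemma compl_top_sub X : DM X -> compl (DM_top T) \subset X.
Proof.
move=> DX; apply/subsetP => t /lbP H; rewrite -DX; apply/lbP => u _.
by rewrite -(cK u); apply: H; apply: imset_f; rewrite inE.
Qed.

Lemma top_DM : DM (DM_top T).
Proof. by apply/eqP; rewrite eqEsubset subsetT sub_lbub. Qed.

Lemma join_top X : DM_join le (DM_top T) X = DM_top T.
Proof. by apply/eqP; rewrite eqEsubset subsetT join_ubl. Qed.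

Lemma meet_compl X : DM X -> DM_meet X (compl X) = DM_bot le.
Proof.
move=> DX; apply/eqP; rewrite /DM_meet eqEsubset subsetI (bot_sub DX) (bot_sub (DM_lb _ _)) !andbT.
apply/subsetP => t /setIP [tX tc].
rewrite (orth0 tX tc); apply/lbP => *; apply: le_z.
Qed.

Lemma join_compl X : DM X -> DM_join le X (compl X) = DM_top T.
Proof.
move=> DX; apply/eqP; rewrite eqEsubset subsetT /=.
apply/subsetP => t _; apply/lbP => u /ubP uU.
have cuX : c u \in compl X.
  apply/lbP => a; rewrite memc => caX; apply: lc; apply: uU.
  by rewrite inE caX.
have : u \in U [set u; c u].
  apply/ubP => a /set2P [->|->]; first exact: le_refl.
  by apply: uU; rewrite inE cuX orbT.
by rewrite ub_pair => /set1P ->; apply: le_o.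
Qed.

End Main.

Theorem corollary4 (T : finType) (le : rel T) (c : T -> T) (z o : T) :
  poset_with_complementation le c z o ->
  pseudo_orthomodular le c ->
  (* DM(P) is a complete lattice, binary meet/join being DM_meet / DM_join *)
  (forall S : {set {set T}}, (forall X, X \in S -> is_DM le X) ->
     (exists J, DM_is_lub le S J) /\ (exists m, DM_is_glb le S m)) /\
  (forall X Y, is_DM le X -> is_DM le Y ->
     DM_is_lub le [set X; Y] (DM_join le X Y) /\
     DM_is_glb le [set X; Y] (DM_meet X Y)) /\
  (* bounds *)
  is_DM le (DM_top T) /\ is_DM le (DM_bot le) /\
  (forall X, is_DM le X -> DM_bot le \subset X /\ X \subset DM_top T) /\
  (* ' is a complementation on DM(P) *)
  (forall X, is_DM le X -> is_DM le (DM_compl le c X)) /\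
  (forall X Y, is_DM le X -> is_DM le Y -> X \subset Y ->
     DM_compl le c Y \subset DM_compl le c X) /\
  (forall X, is_DM le X -> DM_compl le c (DM_compl le c X) = X) /\
  (forall X, is_DM le X ->
     DM_meet X (DM_compl le c X) = DM_bot le /\
     DM_join le X (DM_compl le c X) = DM_top T) /\
  (* orthomodular law *)
  (forall X Y, is_DM le X -> is_DM le Y ->
     DM_join le X Y =
     DM_join le (DM_meet (DM_join le X Y) (DM_compl le c Y)) Y) /\
  (* left residuated lattice w.r.t. odot and impl *)
  (forall X, is_DM le X ->
     DM_odot le c X (DM_top T) = X /\ DM_odot le c (DM_top T) X = X) /\
  (forall X Y Z, is_DM le X -> is_DM le Y -> is_DM le Z ->
     (DM_odot le c X Y \subset Z <-> X \subset DM_impl le c Y Z)).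
Proof.
move=> Hpc Hpom.
split.
  move=> S HS; split.
    exists (lb le (ub le (\bigcup_(X in S) X))); split; first exact: DM_lb.
    split.
      by move=> X XS; apply: subset_trans (bigcup_sup X XS) (sub_lbub _ _).
    by move=> Y DY H; apply: DM_sub DY _; apply/bigcupsP => X XS; apply: H.
  exists (\bigcap_(X in S) X); split; last split.
  - apply/eqP; rewrite eqEsubset sub_lbub andbT; apply/bigcapsP => X XS.
    exact: DM_sub (HS X XS) (bigcap_inf X XS).
  - by move=> X XS; apply: bigcap_inf.
  - by move=> Y _ H; apply/bigcapsP => X XS; apply: H.
split.
  move=> X Y DX DY; split.
    split; first exact: DM_lb.
    split.
      by move=> W /set2P [->|->]; [apply: join_ubl | apply: join_ubr].
    move=> V DV H; apply: join_least DV (H X _) (H Y _); by rewrite !inE eqxx ?orbT.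
  split; first exact: DM_I.
  split.
    by move=> W /set2P [->|->]; [apply: subsetIl | apply: subsetIr].
  by move=> V _ H; rewrite subsetI (H X _) ?(H Y _) // !inE eqxx ?orbT.
split; first exact: top_DM.
split; first exact: DM_lb.
split.
  move=> X DX; split; last exact: subsetT.
  by apply: bot_sub.
split; first by move=> X _; apply: DM_lb.
split; first by move=> X Y _ _; apply: compl_anti.
split; first by move=> X DX; exact: (complK Hpc DX).
split; first by move=> X DX; split; [exact: (meet_compl Hpc DX) | exact: (join_compl Hpc DX)].
split; first by move=> X Y DX DY; exact: (oml Hpc Hpom DX DY).
split.
  move=> X DX; rewrite /DM_odot /DM_meet; split.
    rewrite setIT; apply/eqP; rewrite eqEsubset join_ubl andbT.
    by apply: join_least => //; exact: (compl_top_sub Hpc DX).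
  by rewrite join_top setTI.
by move=> X Y Z DX DY DZ; exact: (resid Hpc Hpom DX DY DZ).
Qed.
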